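(* Let $L\ge3$, $m\ge1$, $x_1>\cdots>x_N$ real, $\mathbf X=(x_1,\dots,x_N)^T$. Let $A_{L,\mathrm{par}}(\mathbf X)$ be the set of all vectors obtainable as the (sign-normalized) output of a single sign-activated unit with hidden widths $m_1=\cdots=m_{L-2}=m$ and $m_{L-1}=1$. Then $A_{L,\mathrm{par}}(\mathbf X)$ contains every vector of $\mathcal H^{(m)}$.
   Context: $\sigma(x)=\mathrm{sign}(x)$ with $\mathrm{sign}(x)=1$ if $x\ge0$, $-1$ if $x<0$, applied entrywise. A single unit with widths $m_0=1,m_1,\dots,m_{L-1}=1$ maps $\mathbf X$ to $\mathbf X^{(L)}$ via $\mathbf X^{(1)}=\mathbf X$ and $\mathbf X^{(l+1)}=\sigma(\mathbf X^{(l)}\mathbf W^{(l)}+\mathbf 1\mathbf b^{(l)})\in\{-1,1\}^{N\times m_l}$ for $l\in[L-1]$, with arbitrary $\mathbf W^{(l)}\in\mathbb R^{m_{l-1}\times m_l}$, $\mathbf b^{(l)}\in\mathbb R^{1\times m_l}$. $A_{L,\mathrm{par}}(\mathbf X)$ is the set of all vectors $\epsilon\mathbf X^{(L)}\in\{-1,1\}^N$ over all such weights and biases, where $\epsilon\in\{-1,1\}$ is chosen so that the first entry is $1$. A vector $\mathbf h\in\{-1,1\}^N$ switches at $n>1$ if $h_n\neq h_{n-1}$; $\mathcal H^{(K)}$ is the set of vectors in $\{-1,1\}^N$ with first entry $1$ that switch at most $K$ times. *)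

(* Defs.v *)
From mathcomp Require Import all_boot all_order all_algebra.
Set Implicit Arguments. Unset Strict Implicit. Unset Printing Implicit Defensive.
Import Order.TTheory GRing.Theory Num.Theory.
Local Open Scope ring_scope.

Definition sgn {R : realFieldType} (x : R) : R := if 0 <= x then 1 else -1.

(* Layer widths (0-indexed): width 0 = m_0 = 1, width l = m for 1 <= l <= L-2,
   width (L-1) = m_{L-1} = 1. *)
Definition width (L m : nat) (l : nat) : nat :=
  match l with
  | 0 => 1%N
  | l'.+1 => if (l'.+1 < L.-1)%N then m else 1%N
  end.

Lemma width_last (L m : nat) : width L m L.-1 = 1%N.
Proof. by case: L => [|[|L]] //=; rewrite ltnn. Qed.

(* Forward pass: fwd X W b k = X^{(k+1)} in the paper's notation;
   W k = W^{(k+1)} : 'M_(m_k, m_{k+1}), b k = b^{(k+1)} : 'rV_(m_{k+1}). *)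
Fixpoint fwd {R : realFieldType} (L m N : nat) (X : 'cV[R]_N)
  (W : forall k : nat, 'M[R]_(width L m k, width L m k.+1))
  (b : forall k : nat, 'rV[R]_(width L m k.+1)) (k : nat) : 'M[R]_(N, width L m k) :=
  match k with
  | 0 => X
  | k'.+1 => map_mx sgn (fwd X W b k' *m W k' + (const_mx 1 : 'cV[R]_N) *m b k')
  end.

Definition net_out {R : realFieldType} (L m N : nat) (X : 'cV[R]_N)
  (W : forall k : nat, 'M[R]_(width L m k, width L m k.+1))
  (b : forall k : nat, 'rV[R]_(width L m k.+1)) : 'cV[R]_N :=
  castmx (erefl N, width_last L m) (fwd X W b L.-1).

Definition first_is_one {R : realFieldType} (N : nat) (v : 'cV[R]_N) : Prop :=
  forall i : 'I_N, val i = 0%N -> v i 0 = 1.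

Definition A_par {R : realFieldType} (L m N : nat) (X : 'cV[R]_N) (v : 'cV[R]_N) : Prop :=
  exists (W : forall k : nat, 'M[R]_(width L m k, width L m k.+1))
         (b : forall k : nat, 'rV[R]_(width L m k.+1)) (eps : R),
    (eps = 1 \/ eps = -1) /\ v = eps *: net_out X W b /\ first_is_one v.

Definition nswitch {R : realFieldType} (N : nat) (h : 'cV[R]_N) : nat :=
  #|[set j : 'I_N | [exists i : 'I_N, (val j == (val i).+1) && (h j 0 != h i 0)]]|.

Definition H_K {R : realFieldType} (N K : nat) (h : 'cV[R]_N) : Prop :=
  (forall i : 'I_N, h i 0 = 1 \/ h i 0 = -1) /\ first_is_one h /\ (nswitch h <= K)%N.

(* Main.v *)
Require Import Defs.
From mathcomp Require Import all_boot all_order all_algebra.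
From mathcomp Require Import lra.
Import Order.TTheory GRing.Theory Num.Theory.
Local Open Scope ring_scope.

Lemma sgn_pos (R : realFieldType) (x : R) : 0 <= x -> sgn x = 1.
Proof. by rewrite /sgn => ->. Qed.

Lemma sgn_neg (R : realFieldType) (x : R) : x < 0 -> sgn x = -1.
Proof. by rewrite /sgn ltNge => /negbTE ->. Qed.

Lemma sgn_pm (R : realFieldType) (x : R) : x = 1 \/ x = -1 -> sgn x = x.
Proof. by case=> ->; [apply: sgn_pos | apply: sgn_neg]; rewrite ?ler01 // oppr_lt0 ltr01. Qed.

Lemma sum_delta (R : realFieldType) w (F : 'I_w -> R) (i : 'I_w) :
  \sum_(l < w) F l * ((val l == val i)%:R) = F i.
Proof.
rewrite (bigD1 i) //= eqxx mulr1 big1 ?addr0 // => l hl.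
by rewrite val_eqE (negbTE hl) mulr0.
Qed.

Lemma sum_delta_nat (R : realFieldType) w (g : nat -> R) j :
  (j < w)%N -> \sum_(l < w) g l * ((val l == j)%:R) = g j.
Proof.
move=> hj; rewrite (bigD1 (Ordinal hj)) //= eqxx mulr1 big1 ?addr0 // => l hl.
have -> : (val l == j) = false.
  by apply/negbTE; apply: contraNneq hl => e; apply/eqP/val_inj.
by rewrite mulr0.
Qed.

Lemma sgn_val (R : realFieldType) (x : R) : sgn x = 1 \/ sgn x = -1.
Proof. by rewrite /sgn; case: ifP; [left|right]. Qed.

Theorem proposition10 (R : realFieldType) (L m N : nat) (X : 'cV[R]_N) :
  (3 <= L)%N -> (1 <= m)%N ->
  (forall i j : 'I_N, (i < j)%N -> X j 0 < X i 0) ->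
  forall h : 'cV[R]_N, H_K m h -> A_par L m X h.
Proof.
move=> hL hm hX h [hpm [h0 hsw]].
case: L hL => [|[|[|L']]] // _.
case: N X hX h hpm h0 hsw => [|N] X hX h hpm h0 hsw.
  exists (fun k => 0), (fun k => 0), 1; split; first by left.
  split; last by move=> [].
  by apply/matrixP => -[].
have Xle : forall i j : 'I_N.+1, (i <= j)%N -> X j 0 <= X i 0.
  move=> i j; rewrite leq_eqVlt => /orP[/eqP/val_inj -> //| /hX /ltW //].
pose h' (n : nat) := h (inord n) 0.
pose S := [set j : 'I_N.+1 | [exists i : 'I_N.+1, (val j == (val i).+1) && (h j 0 != h i 0)]].
pose s := enum S.
pose c (j : 'I_N.+1) := h' (val j) - h' (val j).-1.
pose thr (j : 'I_N.+1) := if val j == 0%N then X ord0 0 + 1 else (X (inord (val j).-1) 0 + X j 0) / 2.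
pose c' (r : nat) := if (r < size s)%N then c (nth ord0 s r) else 0.
pose t (r : nat) := thr (nth ord0 s r).
pose Wf (k i j : nat) : R := if k == 0%N then -1 else if (k < L'.+1)%N then (i == j)%:R else c' i / 2.
pose bf (k j : nat) : R := if k == 0%N then t j else if (k < L'.+1)%N then 0 else 1 + \sum_(r < m) c' r / 2.
pose W := fun k => \matrix_(i < width L'.+3 m k, j < width L'.+3 m k.+1) Wf k i j.
pose b := fun k => \row_(j < width L'.+3 m k.+1) bf k j.
have thrP : forall j n : 'I_N.+1, sgn (thr j - X n 0) = if (j <= n)%N then 1 else -1.
  move=> j n; rewrite /thr.
  case: ifP => [/eqP j0 | /negbT j0].
    rewrite j0 leq0n; apply: sgn_pos.
    have := Xle ord0 n (leq0n _); lra.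
  have vjp : nat_of_ord (inord (val j).-1 : 'I_N.+1) = (val j).-1.
    by rewrite inordK // (leq_ltn_trans (leq_pred _) (ltn_ord j)).
  have hjp : X j 0 < X (inord (val j).-1) 0.
    by apply: hX; rewrite vjp prednK // lt0n.
  case: leqP => hjn.
    apply: sgn_pos; have := Xle _ _ hjn; lra.
  apply: sgn_neg.
  have : X (inord (val j).-1) 0 <= X n 0.
    by apply: Xle; rewrite vjp -ltnS prednK // lt0n.
  lra.
have mid : forall k, (1 <= k <= L'.+1)%N -> forall (n : 'I_N.+1) (i : 'I_(width L'.+3 m k)),
    fwd X W b k n i = sgn (t i - X n 0).
  elim=> [//|k IH] /andP[_ hk] n i.
  rewrite /= !mxE.
  under eq_bigr => l _ do rewrite mxE.
  rewrite big_ord1 !mxE mul1r.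
  case: k IH hk i => [|k] IH hk i.
    rewrite big_ord1 /Wf /bf eqxx mulrN1 addrC.
    congr (sgn (_ - _)).
  have wk : width L'.+3 m k.+1 = m.
    by rewrite /width; case: ifP => //; rewrite ltnS ltnW.
  have wk1 : width L'.+3 m k.+2 = m.
    by rewrite /width; case: ifP => //; rewrite ltnS hk.
  have IH' := IH (ltnW hk) n.
  under eq_bigr => l _ do rewrite IH' /Wf [(k.+1 == 0)%N]/= hk.
  rewrite (@sum_delta_nat R _ (fun l => sgn (t l - X n 0))); last by apply: leq_trans (ltn_ord i) _; rewrite wk wk1.
  rewrite /bf [(k.+1 == 0)%N]/= hk addr0.
  by apply: sgn_pm; apply: sgn_val.
have hs : (size s <= m)%N by rewrite /s -cardE; exact: hsw.
have h'v : forall j : 'I_N.+1, h' (val j) = h j 0 by move=> j; rewrite /h' inord_val.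
have cS : forall j : 'I_N.+1, j \notin S -> c j = 0.
  move=> j; rewrite /c; case: j => [[|j'] hj] /=; first by rewrite subrr.
  rewrite inE => /existsPn /(_ (inord j')).
  rewrite /= inordK ?(ltnW hj) // eqxx /= negbK => /eqP e.
  rewrite /h'.
  have -> : inord j'.+1 = Ordinal hj :> 'I_N.+1 by apply/val_inj; rewrite /= inordK.
  by rewrite e subrr.
have key : forall n : 'I_N.+1, \sum_(r < m) c' r * (nth ord0 s r <= n)%:R = h n 0 - 1.
  move=> n.
  transitivity (\sum_(r < size s) c (nth ord0 s r) * (nth ord0 s r <= n)%:R).
    rewrite [RHS](big_ord_widen m (fun r => c (nth ord0 s r) * (nth ord0 s r <= n)%:R) hs).
    rewrite (bigID (fun r : 'I_m => (r < size s)%N)) /= [X in _ + X]big1 ?addr0.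
      by apply: eq_bigr => r hr; rewrite /c' hr.
    by move=> r /negbTE hr; rewrite /c' hr mul0r.
  rewrite -(big_mkord xpredT (fun r => c (nth ord0 s r) * (nth ord0 s r <= n)%:R)).
  rewrite -(big_nth ord0 xpredT (fun j => c j * (j <= n)%:R)).
  rewrite /s big_enum /= big_mkcond /=.
  transitivity (\sum_(j : 'I_N.+1) c j * (j <= n)%:R).
    by apply: eq_bigr => j _; case: ifP => // /negbT /cS ->; rewrite mul0r.
  transitivity (\sum_(j < N.+1 | (j <= n)%N) (h' j - h' j.-1)).
    by rewrite [RHS]big_mkcond; symmetry; apply: eq_bigr => j _; case: ifP; rewrite ?mulr1 ?mulr0.
  rewrite -(big_mkord (fun j => (j <= n)%N) (fun j => h' j - h' j.-1)).
  transitivity (\sum_(0 <= j < n.+1) (h' j - h' j.-1)).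
    by rewrite [RHS](big_nat_widen 0 n.+1 N.+1) ?ltn_ord.
  rewrite big_nat_recl // subrr add0r.
  rewrite (telescope_sumr h' (leq0n n)) h'v.
  have -> : h' 0%N = 1 by rewrite /h'; apply: h0; exact: inordK.
  by [].
exists W, b, 1; split; first by left.
split; last by [].
rewrite scale1r; apply/matrixP => n j; rewrite (ord1 j) /net_out castmxE.
have -> : cast_ord (esym (erefl, width_last L'.+3 m).1) n = n by apply/val_inj.
move: (cast_ord _ _) => i.
have fwdS : forall k, fwd X W b k.+1 = map_mx sgn (fwd X W b k *m W k + (const_mx 1 : 'cV[R]_N.+1) *m b k) by [].
rewrite (fwdS L'.+1).
have midL : forall i : 'I_(width L'.+3 m L'.+1), fwd X W b L'.+1 n i = sgn (t i - X n 0).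
  by apply: mid; rewrite leqnn.
move: midL; move: (fwd X W b L'.+1) => F midL.
rewrite !mxE.
under eq_bigr => l _ do rewrite mxE.
rewrite big_ord1 !mxE mul1r.
have wL : width L'.+3 m L'.+1 = m by rewrite /width; case: ifP => //; rewrite ltnSn.
have e0 : (L'.+1 == 0%N) = false by [].
under eq_bigr => l _ do rewrite midL /Wf ltnn e0.
rewrite /bf ltnn e0.
rewrite -(big_mkord xpredT (fun l => sgn (t l - X n 0) * (c' l / 2))) wL big_mkord.
rewrite addrCA -big_split /=.
rewrite (eq_bigr (fun r : 'I_m => c' r * (nth ord0 s r <= n)%:R)); last first.
  move=> r _; rewrite /t thrP; case: ifP => _ /=.
    rewrite mul1r mulr1; lra.
  rewrite mulN1r mulr0 addNr //.
rewrite key addrC subrK.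
by apply/esym/sgn_pm/hpm.
Qed.
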